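(* On each of the three charts of $\mathbb OP^2$, with chart coordinates $(u,v)\in\mathbb O^2$, consider the quadratic form on tangent vectors $(du,dv)=(\xi,\eta)\in\mathbb O^2$ $$ds^2=\frac{|\xi|^2(1+|v|^2)+|\eta|^2(1+|u|^2)-2\,\mathrm{Re}\big[(u\bar v)(\eta\bar\xi)\big]}{(1+|u|^2+|v|^2)^2}.$$ Then these expressions are positive definite and agree on chart overlaps, so they define a Riemannian metric on $\mathbb OP^2$.
   Context: Octonions: $\mathbb O=\mathbb H\oplus\mathbb H$ with product $(q_1,q_2)(p_1,p_2)=(q_1p_1-\bar p_2q_2,\ p_2q_1+q_2\bar p_1)$, conjugation $\overline{(q_1,q_2)}=(\bar q_1,-q_2)$, $\mathrm{Re}(a)$ the real part of the first quaternion component, inner product $\langle a,b\rangle=\mathrm{Re}(a\bar b)$, $|a|^2=\langle a,a\rangle$. $\mathbb OP^2=\mathcal U/_\sim$ where $\mathcal U=(\{1\}\times\mathbb O\times\mathbb O)\cup(\mathbb O\times\{1\}\times\mathbb O)\cup(\mathbb O\times\mathbb O\times\{1\})$ and $[a,b,c]\sim[d,e,f]$ iff $a=d\lambda,b=e\lambda,c=f\lambda$ for some $\lambda\in\mathbb O\setminus\{0\}$. The charts are $[1,u,v]\mapsto(u,v)$, $[u,1,v]\mapsto(u,v)$, $[u,v,1]\mapsto(u,v)$; transition maps are e.g. $(a,b)\mapsto(a^{-1},ba^{-1})$ between the first two. *)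

(* Defs.v *)
From HB Require Import structures.
From mathcomp Require Import all_boot all_order all_algebra.
From mathcomp Require Import all_classical all_reals all_analysis.
Set Implicit Arguments. Unset Strict Implicit. Unset Printing Implicit Defensive.
Import Order.TTheory GRing.Theory Num.Theory.
Import numFieldNormedType.Exports.
Local Open Scope ring_scope.

Section Octonions.
Variable R : realType.

(* Quaternions: a + b i + c j + d k represented as ((a,b),c),d). *)
Definition quat := (R * R * R * R)%type.
Definition oct := (quat * quat)%type.

Definition hmul (x y : quat) : quat :=
  let: (a1, b1, c1, d1) := x in
  let: (a2, b2, c2, d2) := y in
  (a1*a2 - b1*b2 - c1*c2 - d1*d2,
   a1*b2 + b1*a2 + c1*d2 - d1*c2,
   a1*c2 - b1*d2 + c1*a2 + d1*b2,
   a1*d2 + b1*c2 - c1*b2 + d1*a2).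

Definition hconj (x : quat) : quat :=
  let: (a, b, c, d) := x in (a, - b, - c, - d).

Definition hre (x : quat) : R := x.1.1.1.

Definition omul (q p : oct) : oct :=
  (hmul q.1 p.1 - hmul (hconj p.2) q.2, hmul p.2 q.1 + hmul q.2 (hconj p.1)).

Definition oconj (q : oct) : oct := (hconj q.1, - q.2).

Definition ore (q : oct) : R := hre q.1.

Definition oinner (a b : oct) : R := ore (omul a (oconj b)).

Definition onorm2 (a : oct) : R := oinner a a.

Definition one_oct : oct := ((1, 0, 0, 0), 0).

Definition oinv (a : oct) : oct := (onorm2 a)^-1 *: oconj a.

Definition odivr (a b : oct) : oct := omul a (oinv b).

Definition ds2 (p w : oct * oct) : R :=
  let: (u, v) := p in
  let: (xi, eta) := w in
  (onorm2 xi * (1 + onorm2 v) + onorm2 eta * (1 + onorm2 u)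
     - 2 * ore (omul (omul u (oconj v)) (omul eta (oconj xi))))
  / (1 + onorm2 u + onorm2 v) ^+ 2.

Definition chart_lift (i : 'I_3) (p : oct * oct) : oct * oct * oct :=
  match val i with
  | 0 => (one_oct, p.1, p.2)
  | 1 => (p.1, one_oct, p.2)
  | _ => (p.1, p.2, one_oct)
  end.

Definition hcoord (j : 'I_3) (x : oct * oct * oct) : oct :=
  match val j with
  | 0 => x.1.1
  | 1 => x.1.2
  | _ => x.2
  end.

Definition chart_map (j : 'I_3) (x : oct * oct * oct) : oct * oct :=
  let: (x1, x2, x3) := x in
  match val j with
  | 0 => (odivr x2 x1, odivr x3 x1)
  | 1 => (odivr x1 x2, odivr x3 x2)
  | _ => (odivr x1 x3, odivr x2 x3)
  end.

(* Transition map from chart i to chart j, defined where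
   hcoord j (chart_lift i p) != 0.  E.g. transition 0 1 (a,b) = (a^-1, b a^-1). *)
Definition transition (i j : 'I_3) (p : oct * oct) : oct * oct :=
  chart_map j (chart_lift i p).

End Octonions.

(* Main.v *)
Require Import Defs.
From HB Require Import structures.
From mathcomp Require Import all_boot all_order all_algebra.
From mathcomp Require Import all_classical all_reals all_analysis.
From mathcomp Require Import ring lra.
Import Order.TTheory GRing.Theory Num.Theory.
Import numFieldNormedType.Exports.
Local Open Scope classical_set_scope.
Local Open Scope ring_scope.

Section Der.
Variable R : realType.
Variable V : normedModType R.

Lemma derive_cvg (W : normedModType R) (f : V -> W) x v df :
  is_derive x v f df ->
  (fun h => h^-1 *: ((f \o shift x) (h *: v) - f x)) @ 0^' --> df.
Proof.
move=> [d e]; rewrite -e; exact: d.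
Qed.

Lemma isd_pair (W1 W2 : normedModType R) (f : V -> W1) (g : V -> W2) x v df dg :
  is_derive x v f df -> is_derive x v g dg ->
  is_derive x v (fun y => (f y, g y)) (df, dg).
Proof.
move=> /derive_cvg hf /derive_cvg hg.
have H : (fun h => h^-1 *: (((fun y => (f y, g y)) \o shift x) (h *: v)
     - (f x, g x))) @ 0^' --> (df, dg).
  exact: (cvg_pair hf hg).
split; first by apply/cvg_ex; exists (df, dg).
exact: cvg_lim H.
Qed.

Lemma isd_fst (W1 W2 : normedModType R) (f : V -> W1 * W2) x v df :
  is_derive x v f df -> is_derive x v (fun y => (f y).1) df.1.
Proof.
move=> /derive_cvg hf.
have H : (fun h => h^-1 *: (((fun y => (f y).1) \o shift x) (h *: v)
     - (f x).1)) @ 0^' --> df.1.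
  exact: (cvg_comp _ _ hf cvg_fst).
split; first by apply/cvg_ex; exists df.1.
exact: cvg_lim H.
Qed.

Lemma isd_snd (W1 W2 : normedModType R) (f : V -> W1 * W2) x v df :
  is_derive x v f df -> is_derive x v (fun y => (f y).2) df.2.
Proof.
move=> /derive_cvg hf.
have H : (fun h => h^-1 *: (((fun y => (f y).2) \o shift x) (h *: v)
     - (f x).2)) @ 0^' --> df.2.
  exact: (cvg_comp _ _ hf cvg_snd).
split; first by apply/cvg_ex; exists df.2.
exact: cvg_lim H.
Qed.


Lemma isdD (W : normedModType R) (f g : V -> W) x v df dg :
  is_derive x v f df -> is_derive x v g dg ->
  is_derive x v (fun y => f y + g y) (df + dg).
Proof. move=> H1 H2; exact: is_deriveD. Qed.

Lemma isdN (W : normedModType R) (f : V -> W) x v df :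
  is_derive x v f df -> is_derive x v (fun y => - f y) (- df).
Proof. move=> H1; exact: is_deriveN. Qed.

Lemma isdM (f g : V -> R) x v df dg :
  is_derive x v f df -> is_derive x v g dg ->
  is_derive x v (fun y => f y * g y) (f x * dg + g x * df).
Proof. move=> H1 H2; exact: is_deriveM. Qed.

Lemma isdV (f : V -> R) x v df :
  f x != 0 -> is_derive x v f df ->
  is_derive x v (fun y => (f y)^-1) (- (f x) ^-2 * df).
Proof.
move=> fx0 [d e]; split; first exact: derivableV.
by rewrite deriveV // e.
Qed.

Lemma isd_cst (W : normedModType R) (c : W) x v :
  is_derive x v (fun _ : V => c) 0.
Proof. exact: is_derive_cst. Qed.

Lemma isd_id x v : is_derive x v (fun y : V => y) v.
Proof. exact: is_derive_id. Qed.

End Der.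

Ltac der :=
  lazymatch goal with
  | |- is_derive _ _ (fun y => (@?f y, @?g y)) _ =>
      eapply (@isd_pair _ _ _ _ f g); [der | der]
  | |- is_derive _ _ (fun y => @?f y + @?g y) _ =>
      eapply (@isdD _ _ _ f g); [der | der]
  | |- is_derive _ _ (fun y => - @?f y) _ =>
      eapply (@isdN _ _ _ f); der
  | |- is_derive _ _ (fun y => @?f y * @?g y) _ =>
      eapply (@isdM _ _ f g); [der | der]
  | |- is_derive _ _ (fun y => (@?f y).1) _ =>
      eapply (@isd_fst _ _ _ _ f); der
  | |- is_derive _ _ (fun y => (@?f y).2) _ =>
      eapply (@isd_snd _ _ _ _ f); der
  | |- is_derive _ _ (fun y => y) _ => eapply isd_id
  | |- is_derive _ _ (fun _ => ?c) _ => eapply isd_cst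
  | _ => eassumption
  end.

Ltac pairs := repeat match goal with |- (_, _) = (_, _) => f_equal end.

Section Oct.
Variable R : realType.
Variable V : normedModType R.
Local Notation oct := (oct R).

Definition octeta (z : oct) : oct :=
  ((((z.1.1.1.1, z.1.1.1.2), z.1.1.2), z.1.2), (((z.2.1.1.1, z.2.1.1.2), z.2.1.2), z.2.2)).
Lemma octetaE z : octeta z = z.
Proof. by case: z => [[[[? ?] ?] ?] [[[? ?] ?] ?]]. Qed.

Lemma pairD (U W : zmodType) (a c : U) (b d : W) : (a, b) + (c, d) = (a + c, b + d).
Proof. by []. Qed.
Lemma pairN (U W : zmodType) (a : U) (b : W) : - (a, b) = (- a, - b).
Proof. by []. Qed.
Lemma pairZ (U W : lmodType R) (s : R) (a : U) (b : W) : s *: (a, b) = (s *: a, s *: b).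
Proof. by []. Qed.
Lemma pair0 (U W : zmodType) : (0 : U * W) = (0, 0).
Proof. by []. Qed.
Lemma scaleRE (s t : R) : s *: t = s * t.
Proof. by []. Qed.


Lemma isd_omul (F G : V -> oct) x v dF dG :
  is_derive x v F dF -> is_derive x v G dG ->
  is_derive x v (fun y => omul (F y) (G y)) (omul dF (G x) + omul (F x) dG).
Proof.
move=> HF HG.
have -> : (fun y => omul (F y) (G y)) = (fun y => omul (octeta (F y)) (octeta (G y))).
  by apply: funext => y; rewrite !octetaE.
rewrite -[dF]octetaE -[dG]octetaE -[F x]octetaE -[G x]octetaE.
rewrite /omul /hmul /hconj /octeta /=.
eapply is_derive_eq; first by der.
rewrite /= ?pairN ?pairD /=. pairs; ring.
Qed.


Lemma isd_oconj (F : V -> oct) x v dF :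
  is_derive x v F dF -> is_derive x v (fun y => oconj (F y)) (oconj dF).
Proof.
move=> HF.
have -> : (fun y => oconj (F y)) = (fun y => oconj (octeta (F y))).
  by apply: funext => y; rewrite !octetaE.
rewrite -[dF]octetaE /oconj /hconj /octeta /=.
eapply is_derive_eq; first by der.
rewrite /= ?pairN ?pairD /=. pairs; ring.
Qed.

Lemma isd_ore (F : V -> oct) x v dF :
  is_derive x v F dF -> is_derive x v (fun y => ore (F y)) (ore dF).
Proof.
move=> HF; rewrite /ore /hre; der.
Qed.

Definition oscale (s : R) (z : oct) : oct :=
  ((((s * z.1.1.1.1, s * z.1.1.1.2), s * z.1.1.2), s * z.1.2),
   (((s * z.2.1.1.1, s * z.2.1.1.2), s * z.2.1.2), s * z.2.2)).
Lemma oscaleE s z : oscale s z = s *: z.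
Proof. by case: z => [[[[? ?] ?] ?] [[[? ?] ?] ?]]. Qed.

Lemma isd_scale (r : V -> R) (F : V -> oct) x v dr dF :
  is_derive x v r dr -> is_derive x v F dF ->
  is_derive x v (fun y => r y *: F y) (r x *: dF + dr *: F x).
Proof.
move=> Hr HF.
have -> : (fun y => r y *: F y) = (fun y => oscale (r y) (F y)).
  by apply: funext => y; rewrite !oscaleE.
rewrite -[dF]octetaE -[F x]octetaE /octeta /oscale /=.
eapply is_derive_eq; first by der.
rewrite /= ?pairZ ?pairN ?pairD ?scaleRE /=. pairs; ring.
Qed.

End Oct.

Ltac oder :=
  lazymatch goal with
  | |- is_derive _ _ (fun y => (@?f y, @?g y)) _ =>
      eapply (@isd_pair _ _ _ _ f g); [oder | oder]
  | |- is_derive _ _ (fun y => omul (@?f y) (@?g y)) _ =>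
      eapply (@isd_omul _ _ f g); [oder | oder]
  | |- is_derive _ _ (fun y => oconj (@?f y)) _ =>
      eapply (@isd_oconj _ _ f); oder
  | |- is_derive _ _ (fun y => ore (@?f y)) _ =>
      eapply (@isd_ore _ _ f); oder
  | |- is_derive _ _ (fun y => @?r y *: @?f y) _ =>
      eapply (@isd_scale _ _ r f); [oder | oder]
  | |- is_derive _ _ (fun y => (@?f y)^-1) _ =>
      eapply (@isdV _ _ f); [ | oder]
  | |- is_derive _ _ (fun y => (@?f y).1) _ =>
      eapply (@isd_fst _ _ _ _ f); oder
  | |- is_derive _ _ (fun y => (@?f y).2) _ =>
      eapply (@isd_snd _ _ _ _ f); oder
  | |- is_derive _ _ (fun y => y) _ => eapply isd_id
  | |- is_derive _ _ (fun _ => ?c) _ => eapply isd_cst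
  | _ => eassumption
  end.

Lemma pairD' (U W : zmodType) (a c : U) (b d : W) : (a, b) + (c, d) = (a + c, b + d).
Proof. by []. Qed.
Lemma pairN' (U W : zmodType) (a : U) (b : W) : - (a, b) = (- a, - b).
Proof. by []. Qed.
Lemma pairZ' (R : realType) (U W : lmodType R) (s : R) (a : U) (b : W) : s *: (a, b) = (s *: a, s *: b).
Proof. by []. Qed.
Lemma pair0' (U W : zmodType) : (0 : U * W) = (0, 0).
Proof. by []. Qed.
Lemma scaleRE' (R : realType) (s t : R) : s *: t = s * t.
Proof. by []. Qed.
Ltac ocase x := case: x => [[[[? ?] ?] ?] [[[? ?] ?] ?]].
Ltac osimp := rewrite /onorm2 /oinner /omul /hmul /hconj /oconj /ore /hre /one_oct /=;
  rewrite ?pair0' ?pairZ' ?pairN' ?pairD' ?scaleRE' /=.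
Ltac osolve := osimp; pairs; ring.

Section Alg.
Variable R : realType.
Local Notation oct := (oct R).

Lemma omulDl (x y z : oct) : omul (x + y) z = omul x z + omul y z.
Proof. ocase x; ocase y; ocase z; osolve. Qed.
Lemma omulDr (x y z : oct) : omul z (x + y) = omul z x + omul z y.
Proof. ocase x; ocase y; ocase z; osolve. Qed.
Lemma omulZl (s : R) (x y : oct) : omul (s *: x) y = s *: omul x y.
Proof. ocase x; ocase y; osolve. Qed.
Lemma omulZr (s : R) (x y : oct) : omul x (s *: y) = s *: omul x y.
Proof. ocase x; ocase y; osolve. Qed.
Lemma omul0l (x : oct) : omul 0 x = 0.
Proof. ocase x; osolve. Qed.
Lemma omul1l (x : oct) : omul (one_oct R) x = x.
Proof. ocase x; osolve. Qed.
Lemma omul1r (x : oct) : omul x (one_oct R) = x.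
Proof. ocase x; osolve. Qed.
Lemma oconjD (x y : oct) : oconj (x + y) = oconj x + oconj y.
Proof. ocase x; ocase y; osolve. Qed.
Lemma oconjZ (s : R) (x : oct) : oconj (s *: x) = s *: oconj x.
Proof. ocase x; osolve. Qed.
Lemma oconjK (x : oct) : oconj (oconj x) = x.
Proof. ocase x; osolve. Qed.
Lemma oreD (x y : oct) : ore (x + y) = ore x + ore y.
Proof. ocase x; ocase y; osolve. Qed.
Lemma oreZ (s : R) (x : oct) : ore (s *: x) = s * ore x.
Proof. ocase x; osolve. Qed.

Lemma n2M (x y : oct) : onorm2 (omul x y) = onorm2 x * onorm2 y.
Proof. ocase x; ocase y; osolve. Qed.

Lemma L4 (a b xi eta : oct) (r s : R) :
  onorm2 (omul eta (r *: oconj a) + omul b (r *: oconj xi + s *: oconj a)) =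
  r^+2 * onorm2 eta * onorm2 a + r^+2 * onorm2 b * onorm2 xi + s^+2 * onorm2 b * onorm2 a
  + 2 * r^+2 * oinner (omul eta (oconj a)) (omul b (oconj xi))
  + 2 * r * s * onorm2 a * oinner eta b + 2 * r * s * onorm2 b * oinner a xi.
Proof. ocase a; ocase b; ocase xi; ocase eta. osolve. Qed.

Lemma Kid (a b xi eta : oct) :
  oinner (omul eta (oconj a)) (omul b (oconj xi)) +
  ore (omul (omul a (oconj b)) (omul eta (oconj xi))) =
  2 * oinner a xi * oinner eta b.
Proof. ocase a; ocase b; ocase xi; ocase eta. osolve. Qed.


Lemma L1 (a : oct) (r : R) : onorm2 (r *: oconj a) = r^+2 * onorm2 a.
Proof. ocase a; osolve. Qed.
Lemma L2 (a b : oct) (r : R) : onorm2 (omul b (r *: oconj a)) = r^+2 * (onorm2 b * onorm2 a).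
Proof. ocase a; ocase b; osolve. Qed.
Lemma L3 (a xi : oct) (r s : R) : onorm2 (r *: oconj xi + s *: oconj a) =
  r^+2 * onorm2 xi + 2 * r * s * oinner a xi + s^+2 * onorm2 a.
Proof. ocase a; ocase xi; osolve. Qed.
Lemma L5a (a b : oct) (r : R) :
  omul (r *: oconj a) (oconj (omul b (r *: oconj a))) = (r^+2 * onorm2 a) *: oconj b.
Proof. ocase a; ocase b; osolve. Qed.
Lemma L5b (a b xi eta : oct) (r s t : R) :
  ore (omul (t *: oconj b) (omul (omul eta (r *: oconj a) + omul b (r *: oconj xi + s *: oconj a))
     (oconj (r *: oconj xi + s *: oconj a)))) =
  t * (r^+2 * oinner (omul eta (oconj a)) (omul b (oconj xi)) + r * s * onorm2 a * oinner eta b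
   + r^+2 * onorm2 b * onorm2 xi + 2 * r * s * onorm2 b * oinner a xi + s^+2 * onorm2 b * onorm2 a).
Proof. ocase a; ocase b; ocase xi; ocase eta. osolve. Qed.

Lemma n2E (x : oct) : onorm2 x = x.1.1.1.1^+2 + x.1.1.1.2^+2 + x.1.1.2^+2 + x.1.2^+2
  + x.2.1.1.1^+2 + x.2.1.1.2^+2 + x.2.1.2^+2 + x.2.2^+2.
Proof. ocase x; osolve. Qed.
Lemma n2_ge0 (x : oct) : 0 <= onorm2 x.
Proof. rewrite n2E; (repeat apply: addr_ge0); exact: sqr_ge0. Qed.

Lemma K1 (a b xi eta : oct) : onorm2 a != 0 ->
  let r := (onorm2 a)^-1 in let s := - (2 * oinner a xi) / (onorm2 a)^+2 in
  ds2 (r *: oconj a, omul b (r *: oconj a))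
      (r *: oconj xi + s *: oconj a, omul eta (r *: oconj a) + omul b (r *: oconj xi + s *: oconj a))
  = ds2 (a, b) (xi, eta).
Proof.
move=> Na r s.
rewrite /ds2 /= L1 L2 L3 L4 L5a L5b.
have -> : ore (omul (omul a (oconj b)) (omul eta (oconj xi))) =
  2 * oinner a xi * oinner eta b - oinner (omul eta (oconj a)) (omul b (oconj xi)).
  by rewrite -Kid addrC addKr.
have Npos : 0 < onorm2 a by rewrite lt_neqAle eq_sym Na n2_ge0.
have B0 := n2_ge0 b.
move: Npos B0 Na; rewrite /r /s.
generalize (onorm2 a) (onorm2 b) (onorm2 xi) (onorm2 eta) (oinner a xi) (oinner eta b)
  (oinner (omul eta (oconj a)) (omul b (oconj xi))) => N B X E c e k Np Bp Nn.
field.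
have h : 0 < 1 + N + B by lra.
by rewrite Nn andbT gt_eqF.
Qed.
End Alg.


Lemma sum8 (R : realType) (x0 x1 x2 x3 x4 x5 x6 x7 : R) :
  x0^+2 + x1^+2 + x2^+2 + x3^+2 + x4^+2 + x5^+2 + x6^+2 + x7^+2 = 0 ->
  (x0 = 0 /\ x1 = 0 /\ x2 = 0 /\ x3 = 0) /\ (x4 = 0 /\ x5 = 0 /\ x6 = 0 /\ x7 = 0).
Proof.
have z : forall t : R, t ^+ 2 = 0 -> t = 0 by move=> t /eqP; rewrite sqrf_eq0 => /eqP.
move=> h.
have p0 : 0 <= x0^+2 := sqr_ge0 x0. have p1 : 0 <= x1^+2 := sqr_ge0 x1.
have p2 : 0 <= x2^+2 := sqr_ge0 x2. have p3 : 0 <= x3^+2 := sqr_ge0 x3.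
have p4 : 0 <= x4^+2 := sqr_ge0 x4. have p5 : 0 <= x5^+2 := sqr_ge0 x5.
have p6 : 0 <= x6^+2 := sqr_ge0 x6. have p7 : 0 <= x7^+2 := sqr_ge0 x7.
move: h p0 p1 p2 p3 p4 p5 p6 p7 (z x0) (z x1) (z x2) (z x3) (z x4) (z x5) (z x6) (z x7).
generalize (x0^+2) (x1^+2) (x2^+2) (x3^+2) (x4^+2) (x5^+2) (x6^+2) (x7^+2).
move=> a0 a1 a2 a3 a4 a5 a6 a7 h p0 p1 p2 p3 p4 p5 p6 p7 z0 z1 z2 z3 z4 z5 z6 z7.
split; split; [apply: z0 | split; [apply: z1 | split; [apply: z2 | apply: z3]]
  | apply: z4 | split; [apply: z5 | split; [apply: z6 | apply: z7]]].
all: lra.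
Qed.

Section Main.
Variable R : realType.
Local Notation oct := (oct R).

Lemma lagrange (x y : oct) : onorm2 x * onorm2 y - oinner x y ^+ 2 = (x.1.1.1.1 * y.1.1.1.2 - x.1.1.1.2 * y.1.1.1.1)^+2 + (x.1.1.1.1 * y.1.1.2 - x.1.1.2 * y.1.1.1.1)^+2 + (x.1.1.1.1 * y.1.2 - x.1.2 * y.1.1.1.1)^+2 + (x.1.1.1.1 * y.2.1.1.1 - x.2.1.1.1 * y.1.1.1.1)^+2 + (x.1.1.1.1 * y.2.1.1.2 - x.2.1.1.2 * y.1.1.1.1)^+2 + (x.1.1.1.1 * y.2.1.2 - x.2.1.2 * y.1.1.1.1)^+2 + (x.1.1.1.1 * y.2.2 - x.2.2 * y.1.1.1.1)^+2 + (x.1.1.1.2 * y.1.1.2 - x.1.1.2 * y.1.1.1.2)^+2 + (x.1.1.1.2 * y.1.2 - x.1.2 * y.1.1.1.2)^+2 + (x.1.1.1.2 * y.2.1.1.1 - x.2.1.1.1 * y.1.1.1.2)^+2 + (x.1.1.1.2 * y.2.1.1.2 - x.2.1.1.2 * y.1.1.1.2)^+2 + (x.1.1.1.2 * y.2.1.2 - x.2.1.2 * y.1.1.1.2)^+2 + (x.1.1.1.2 * y.2.2 - x.2.2 * y.1.1.1.2)^+2 + (x.1.1.2 * y.1.2 - x.1.2 * y.1.1.2)^+2 + (x.1.1.2 * y.2.1.1.1 - x.2.1.1.1 * y.1.1.2)^+2 + (x.1.1.2 * y.2.1.1.2 - x.2.1.1.2 * y.1.1.2)^+2 + (x.1.1.2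 * y.2.1.2 - x.2.1.2 * y.1.1.2)^+2 + (x.1.1.2 * y.2.2 - x.2.2 * y.1.1.2)^+2 + (x.1.2 * y.2.1.1.1 - x.2.1.1.1 * y.1.2)^+2 + (x.1.2 * y.2.1.1.2 - x.2.1.1.2 * y.1.2)^+2 + (x.1.2 * y.2.1.2 - x.2.1.2 * y.1.2)^+2 + (x.1.2 * y.2.2 - x.2.2 * y.1.2)^+2 + (x.2.1.1.1 * y.2.1.1.2 - x.2.1.1.2 * y.2.1.1.1)^+2 + (x.2.1.1.1 * y.2.1.2 - x.2.1.2 * y.2.1.1.1)^+2 + (x.2.1.1.1 * y.2.2 - x.2.2 * y.2.1.1.1)^+2 + (x.2.1.1.2 * y.2.1.2 - x.2.1.2 * y.2.1.1.2)^+2 + (x.2.1.1.2 * y.2.2 - x.2.2 * y.2.1.1.2)^+2 + (x.2.1.2 * y.2.2 - x.2.2 * y.2.1.2)^+2.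
Proof. ocase x; ocase y; osimp. ring. Qed.

Lemma cs (x y : oct) : oinner x y ^+ 2 <= onorm2 x * onorm2 y.
Proof. rewrite -subr_ge0 lagrange; (repeat apply: addr_ge0); exact: sqr_ge0. Qed.

Lemma ore_inner (x y : oct) : ore (omul x y) = oinner x (oconj y).
Proof. ocase x; ocase y; osolve. Qed.

Lemma n2C (x : oct) : onorm2 (oconj x) = onorm2 x.
Proof. ocase x; osolve. Qed.

Lemma n2_eq0 (x : oct) : onorm2 x = 0 -> x = 0.
Proof.
case: x => [[[[x0 x1] x2] x3] [[[x4 x5] x6] x7]]; rewrite n2E /=.
by move=> /sum8 [[-> [-> [-> ->]]] [-> [-> [-> ->]]]].
Qed.

Lemma n2_neq0 (x : oct) : x != 0 -> onorm2 x != 0.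
Proof. by move=> hx; apply/eqP => /n2_eq0 h; rewrite h eqxx in hx. Qed.

Lemma ds2_pos (p w : oct * oct) : w != 0 -> 0 < ds2 p w.
Proof.
case: p => u v; case: w => xi eta hw; rewrite /ds2 /=.
have hm : 2 * ore (omul (omul u (oconj v)) (omul eta (oconj xi))) <=
    onorm2 xi * onorm2 v + onorm2 eta * onorm2 u.
  have := cs (omul u (oconj v)) (oconj (omul eta (oconj xi))).
  rewrite -ore_inner n2C !n2M !n2C.
  have := n2_ge0 _ xi; have := n2_ge0 _ v; have := n2_ge0 _ eta; have := n2_ge0 _ u.
  generalize (ore (omul (omul u (oconj v)) (omul eta (oconj xi)))) (onorm2 xi) (onorm2 v)
    (onorm2 eta) (onorm2 u) => m X V E U hU hE hV hX h.
  have hP : 0 <= X * V by apply: mulr_ge0.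
  have hQ : 0 <= E * U by apply: mulr_ge0.
  have h' : m ^+ 2 <= (X * V) * (E * U).
    by apply: (le_trans h); rewrite le_eqVlt; apply/orP; left; apply/eqP; ring.
  move: hP hQ h'; generalize (X * V) (E * U) => P Q hP hQ h'.
  have hs : 0 <= (P - Q) ^+ 2 by apply: sqr_ge0.
  nra.
have hXE : 0 < onorm2 xi + onorm2 eta.
  have := n2_ge0 _ xi; have := n2_ge0 _ eta.
  have : (onorm2 xi != 0) || (onorm2 eta != 0).
    case: (eqVneq xi 0) => [e1|/n2_neq0 -> //].
    case: (eqVneq eta 0) => [e2|/n2_neq0 ->]; last by rewrite orbT.
    by move: hw; rewrite e1 e2 eqxx.
  case/orP => h1 h2 h3.
    have : 0 < onorm2 xi by rewrite lt_neqAle eq_sym h1 h3.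
    lra.
  have : 0 < onorm2 eta by rewrite lt_neqAle eq_sym h1 h2.
  lra.
have := n2_ge0 _ u; have := n2_ge0 _ v; have := n2_ge0 _ xi; have := n2_ge0 _ eta.
move: hm hXE.
generalize (ore (omul (omul u (oconj v)) (omul eta (oconj xi)))) (onorm2 xi) (onorm2 v)
    (onorm2 eta) (onorm2 u) => m X V E U hm hXE hE hX hV hU.
apply: divr_gt0; last by apply: exprn_gt0; lra.
have -> : X * (1 + V) + E * (1 + U) - 2 * m = (X + E) + (X * V + E * U - 2 * m) by ring.
lra.
Qed.

End Main.


Section Final.
Variable R : realType.
Local Notation oct := (oct R).

Definition DT1 (a b xi eta : oct) : oct * oct :=
  let r := (onorm2 a)^-1 in let s := - (2 * oinner a xi) / (onorm2 a)^+2 in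
  (r *: oconj xi + s *: oconj a,
   omul eta (r *: oconj a) + omul b (r *: oconj xi + s *: oconj a)).

Lemma dn2 (a xi : oct) : ore (omul xi (oconj a) + omul a (oconj xi)) = 2 * oinner a xi.
Proof. ocase a; ocase xi; osolve. Qed.

Lemma scal_eq (N c : R) : - N ^- 2 * (2 * c) = - (2 * c) / N ^+ 2.
Proof. by rewrite !mulNr mulrC. Qed.

Lemma isd_T1 (p w : oct * oct) : onorm2 p.1 != 0 ->
  is_derive p w (fun q : oct * oct => (odivr (one_oct R) q.1, odivr q.2 q.1))
    (DT1 p.1 p.2 w.1 w.2).
Proof.
move=> H; unfold odivr, Defs.oinv, onorm2, oinner.
eapply is_derive_eq; first (oder; exact: H).
rewrite /DT1 omul0l omul1l add0r dn2 -/(oinner p.1 p.1) -/(onorm2 p.1) scal_eq.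
by [].
Qed.

Lemma isd_T2 (p w : oct * oct) : onorm2 p.2 != 0 ->
  is_derive p w (fun q : oct * oct => (odivr q.1 q.2, odivr (one_oct R) q.2))
    ((DT1 p.2 p.1 w.2 w.1).2, (DT1 p.2 p.1 w.2 w.1).1).
Proof.
move=> H; unfold odivr, Defs.oinv, onorm2, oinner.
eapply is_derive_eq; first (oder; exact: H).
rewrite /DT1 omul0l omul1l add0r dn2 -/(oinner p.2 p.2) -/(onorm2 p.2) scal_eq.
by [].
Qed.

Lemma isd_T3 (p w : oct * oct) : onorm2 p.1 != 0 ->
  is_derive p w (fun q : oct * oct => (odivr q.2 q.1, odivr (one_oct R) q.1))
    ((DT1 p.1 p.2 w.1 w.2).2, (DT1 p.1 p.2 w.1 w.2).1).
Proof.
move=> H; unfold odivr, Defs.oinv, onorm2, oinner.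
eapply is_derive_eq; first (oder; exact: H).
rewrite /DT1 omul0l omul1l add0r dn2 -/(oinner p.1 p.1) -/(onorm2 p.1) scal_eq.
by [].
Qed.

Lemma isd_T4 (p w : oct * oct) : onorm2 p.2 != 0 ->
  is_derive p w (fun q : oct * oct => (odivr (one_oct R) q.2, odivr q.1 q.2))
    (DT1 p.2 p.1 w.2 w.1).
Proof.
move=> H; unfold odivr, Defs.oinv, onorm2, oinner.
eapply is_derive_eq; first (oder; exact: H).
rewrite /DT1 omul0l omul1l add0r dn2 -/(oinner p.2 p.2) -/(onorm2 p.2) scal_eq.
by [].
Qed.

Lemma ds2_swap (u v xi eta : oct) : ds2 (v, u) (eta, xi) = ds2 (u, v) (xi, eta).
Proof.
rewrite /ds2 /=.
have -> : ore (omul (omul v (oconj u)) (omul xi (oconj eta))) =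
          ore (omul (omul u (oconj v)) (omul eta (oconj xi))).
  by ocase u; ocase v; ocase xi; ocase eta; osolve.
generalize (ore (omul (omul u (oconj v)) (omul eta (oconj xi)))) (onorm2 xi) (onorm2 v)
    (onorm2 eta) (onorm2 u) => m X V E U.
by rewrite [1 + V + U]addrAC [E * _ + _]addrC.
Qed.

Lemma ds2_T1 (a b xi eta : oct) : onorm2 a != 0 ->
  ds2 (odivr (one_oct R) a, odivr b a) (DT1 a b xi eta) = ds2 (a, b) (xi, eta).
Proof. move=> H; rewrite /odivr omul1l; exact: K1. Qed.

Lemma odivr1 (x : oct) : odivr x (one_oct R) = x.
Proof.
rewrite /odivr.
have -> : Defs.oinv (one_oct R) = one_oct R.
  rewrite /Defs.oinv.
  have -> : onorm2 (one_oct R) = 1 by osolve.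
  by rewrite invr1 scale1r; osolve.
by rewrite omul1r.
Qed.


Lemma case_id (f : oct * oct -> oct * oct) p w :
  (forall q, f q = (odivr q.1 (one_oct R), odivr q.2 (one_oct R))) ->
  derivable f p w /\ ds2 (f p) ('D_w f p) = ds2 p w.
Proof.
move=> Hf; have -> : f = (fun q => q).
  by apply: funext => -[x y]; rewrite Hf /= !odivr1.
 have D := @isd_id _ _ p w; split; first exact: ex_derive.
by rewrite derive_val.
Qed.

Lemma case_T1 (a b xi eta : oct) (f : oct * oct -> oct * oct) : a != 0 ->
  f = (fun q => (odivr (one_oct R) q.1, odivr q.2 q.1)) ->
  derivable f (a, b) (xi, eta) /\ ds2 (f (a, b)) ('D_(xi, eta) f (a, b)) = ds2 (a, b) (xi, eta).
Proof.
move=> Ha ->; have D := isd_T1 (a, b) (xi, eta) (@n2_neq0 _ _ Ha).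
split; first exact: ex_derive.
rewrite derive_val; exact: ds2_T1 (@n2_neq0 _ _ Ha).
Qed.

Lemma case_T2 (a b xi eta : oct) (f : oct * oct -> oct * oct) : b != 0 ->
  f = (fun q => (odivr q.1 q.2, odivr (one_oct R) q.2)) ->
  derivable f (a, b) (xi, eta) /\ ds2 (f (a, b)) ('D_(xi, eta) f (a, b)) = ds2 (a, b) (xi, eta).
Proof.
move=> Hb ->; have D := isd_T2 (a, b) (xi, eta) (@n2_neq0 _ _ Hb).
split; first exact: ex_derive.
rewrite derive_val.
transitivity (ds2 (b, a) (eta, xi)); last exact: ds2_swap.
transitivity (ds2 (odivr (one_oct R) b, odivr a b) (DT1 b a eta xi));
  last exact: ds2_T1 (@n2_neq0 _ _ Hb).
exact: ds2_swap.
Qed.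

Lemma case_T3 (a b xi eta : oct) (f : oct * oct -> oct * oct) : a != 0 ->
  f = (fun q => (odivr q.2 q.1, odivr (one_oct R) q.1)) ->
  derivable f (a, b) (xi, eta) /\ ds2 (f (a, b)) ('D_(xi, eta) f (a, b)) = ds2 (a, b) (xi, eta).
Proof.
move=> Ha ->; have D := isd_T3 (a, b) (xi, eta) (@n2_neq0 _ _ Ha).
split; first exact: ex_derive.
rewrite derive_val.
transitivity (ds2 (odivr (one_oct R) a, odivr b a) (DT1 a b xi eta));
  last exact: ds2_T1 (@n2_neq0 _ _ Ha).
exact: ds2_swap.
Qed.

Lemma case_T4 (a b xi eta : oct) (f : oct * oct -> oct * oct) : b != 0 ->
  f = (fun q => (odivr (one_oct R) q.2, odivr q.1 q.2)) ->
  derivable f (a, b) (xi, eta) /\ ds2 (f (a, b)) ('D_(xi, eta) f (a, b)) = ds2 (a, b) (xi, eta).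
Proof.
move=> Hb ->; have D := isd_T4 (a, b) (xi, eta) (@n2_neq0 _ _ Hb).
split; first exact: ex_derive.
rewrite derive_val.
transitivity (ds2 (b, a) (eta, xi)); last exact: ds2_swap.
exact: ds2_T1 (@n2_neq0 _ _ Hb).
Qed.

End Final.

Local Close Scope classical_set_scope.
Theorem theorem3p4 (R : realType) :
  (forall p w : oct R * oct R, w != 0 -> 0 < ds2 p w) /\
  (forall (i j : 'I_3) (p w : oct R * oct R),
      hcoord j (chart_lift i p) != 0 ->
      derivable (transition i j) p w /\
      ds2 (transition i j p) ('D_w (transition i j) p) = ds2 p w).
Proof.
split; first by move=> p w hw; exact: ds2_pos.
move=> i j [a b] [xi eta].
case: i => [[|[|[|i]]] Hi] //; case: j => [[|[|[|j]]] Hj] //;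
  rewrite /hcoord /chart_lift /= => H.
- by apply: case_id => q.
- apply: case_T1; [exact: H | apply: funext => q; reflexivity].
- apply: case_T4; [exact: H | apply: funext => q; reflexivity].
- apply: case_T1; [exact: H | apply: funext => q; reflexivity].
- by apply: case_id => q.
- apply: case_T2; [exact: H | apply: funext => q; reflexivity].
- apply: case_T3; [exact: H | apply: funext => q; reflexivity].
- apply: case_T2; [exact: H | apply: funext => q; reflexivity].
- by apply: case_id => q.
Qed.
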